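(* Let $p(x)=\frac1{\sqrt{2\pi}}e^{-x^2/2}$ be the density of $N(0,1)$ on $\mathbb{R}$. There exists an absolute constant $C$ such that for every $\varepsilon>0$ there exists a probability density $q$ on $\mathbb{R}$ such that (1) $\ln q$ is $C$-smooth (i.e. $(\ln q)'$ is $C$-Lipschitz); (2) $\mathbb{E}_p\big[|(\ln p)'(x)-(\ln q)'(x)|^2\big]<\varepsilon$; (3) $\mathrm{TV}(p,q)>1-\varepsilon$. *)

(* Defs.v *)
From Stdlib Require Import Reals.
From Coquelicot Require Import Coquelicot.
Open Scope R_scope.

Definition gauss (x : R) : R := / sqrt (2 * PI) * exp (- (x ^ 2) / 2).

Definition is_RInt_R (f : R -> R) (v : R) : Prop :=
  is_RInt_gen f (Rbar_locally m_infty) (Rbar_locally p_infty) v.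

Definition is_prob_density (q : R -> R) : Prop :=
  (forall x, 0 <= q x) /\ is_RInt_R q 1.

Definition score (q : R -> R) (x : R) : R := Derive (fun y => ln (q y)) x.

Definition log_smooth (C : R) (q : R -> R) : Prop :=
  (forall x, 0 < q x) /\
  (forall x, ex_derive (fun y => ln (q y)) x) /\
  (forall x y, Rabs (score q x - score q y) <= C * Rabs (x - y)).

Definition tv_is (p q : R -> R) (t : R) : Prop :=
  exists v, is_RInt_R (fun x => Rabs (p x - q x)) v /\ t = v / 2.

Definition score_div_is (p q : R -> R) (t : R) : Prop :=
  is_RInt_R (fun x => p x * (score p x - score q x) ^ 2) t.

(* Main.v *)
Require Import Defs.
From Stdlib Require Import Reals Lra Psatz FunctionalExtensionality.
From Coquelicot Require Import Coquelicot.
Open Scope R_scope.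


Lemma exR (f : R -> R) a b : (forall x, continuous f x) -> ex_RInt f a b.
Proof. intros Hc; apply (@ex_RInt_continuous R_CompleteNormedModule); intros; apply Hc. Qed.

Lemma RInt_mono_int (f : R -> R) a0 b0 a b :
  (forall x, continuous f x) -> (forall x, 0 <= f x) ->
  a <= a0 -> a0 <= b0 -> b0 <= b -> RInt f a0 b0 <= RInt f a b.
Proof.
  intros Hc Hp H1 H2 H3.
  rewrite <- (RInt_Chasles f a a0 b) by apply exR, Hc.
  rewrite <- (RInt_Chasles f a0 b0 b) by apply exR, Hc.
  assert (0 <= RInt f a a0) by (apply RInt_ge_0; auto; apply exR, Hc).
  assert (0 <= RInt f b0 b) by (apply RInt_ge_0; auto; apply exR, Hc).
  change plus with Rplus. lra.
Qed.

Lemma mono_int (f : R -> R) (B : R) :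
 (forall x, continuous f x) -> (forall x, 0 <= f x) ->
 (forall a b, a <= b -> RInt f a b <= B) ->
 exists l, is_RInt_R f l /\ (forall a b, a <= b -> RInt f a b <= l) /\
   (forall d, 0 < d -> exists a b, a <= b /\ l - d < RInt f a b).
Proof.
  intros Hc Hp HB.
  set (E := fun y => exists a b, a <= b /\ y = RInt f a b).
  assert (Hb : bound E) by (exists B; intros y [a [b [Hab ->]]]; auto).
  assert (Hne : exists y, E y) by (exists (RInt f 0 0); exists 0, 0; split; auto; lra).
  destruct (completeness E Hb Hne) as [l [Hub Hlub]].
  assert (Hup : forall a b, a <= b -> RInt f a b <= l) by
    (intros a b Hab; apply Hub; exists a, b; auto).
  assert (Happ : forall d, 0 < d -> exists a b, a <= b /\ l - d < RInt f a b).
  { intros d Hd. apply Classical_Prop.NNPP; intros Hn.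
    assert (l <= l - d); [|lra].
    apply Hlub. intros y [a [b [Hab ->]]].
    destruct (Rle_lt_dec (RInt f a b) (l - d)); auto.
    exfalso; apply Hn; exists a, b; auto. }
  exists l; split; [|split; auto].
  intros P [eps Heps].
  destruct (Happ eps (cond_pos eps)) as [a0 [b0 [Hab0 Hl0]]].
  exists (fun a => a < a0) (fun b => b0 < b).
  - exists a0; auto.
  - exists b0; auto.
  - intros a b Ha Hb'. exists (RInt f a b); split.
    + apply (@RInt_correct R_CompleteNormedModule), exR, Hc.
    + apply Heps. simpl.
      assert (RInt f a0 b0 <= RInt f a b) by (apply RInt_mono_int; auto; lra).
      assert (RInt f a b <= l) by (apply Hup; lra).
      change (Rabs (RInt f a b - l) < eps). apply Rabs_def1; lra.
Qed.

Ltac req := match goal with |- ?a = ?b => change (@eq R a b) end.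

Lemma exp_le (a b : R) : a <= b -> exp a <= exp b.
Proof. intros [H|H]. apply Rlt_le, exp_increasing, H. rewrite H; lra. Qed.

Definition ee (x : R) := exp (- (x ^ 2) / 2).
Definition FF (x : R) := RInt ee 0 x.
Definition gg (u t : R) := exp (- (u ^ 2 * (1 + t ^ 2)) / 2) / (1 + t ^ 2).
Definition GG (x : R) := RInt (fun t => gg x t) 0 1.
Definition hh (x : R) := FF x * FF x + 2 * GG x.

Lemma ee_cont x : continuous ee x.
Proof. apply (@ex_derive_continuous R_AbsRing R_NormedModule). unfold ee. auto_derive. auto. Qed.

Lemma FF_deriv x : is_derive FF x (ee x).
Proof.
  apply (@is_derive_RInt R_NormedModule ee FF 0 x).
  - exists (mkposreal 1 Rlt_0_1). intros y _. unfold FF.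
    apply (@RInt_correct R_CompleteNormedModule), exR, ee_cont.
  - apply ee_cont.
Qed.

Lemma gg_deriv u t : is_derive (fun z => gg z t) u (- u * exp (- (u ^ 2 * (1 + t ^ 2)) / 2)).
Proof.
  unfold gg. auto_derive.
  - assert (0 <= t^2) by (apply pow2_ge_0). lra.
  - assert (0 <= t^2) by (apply pow2_ge_0).
    replace (- (u * (u * 1) * (1 + t * (t * 1))) * / 2) with (- (u ^ 2 * (1 + t ^ 2)) / 2) by field.
    field. lra.
Qed.

Lemma gg_cont2 x t : continuity_2d_pt (fun u v => Derive (fun z => gg z v) u) x t.
Proof.
  apply continuity_2d_pt_ext with (fun u v => (-1 * u) * exp ((-1/2) * ((u * u) * (1 + v * v)))).
  { intros u v. assert (H : Derive (fun z => gg z v) u = - u * exp (- (u ^ 2 * (1 + v ^ 2)) / 2)) by (apply is_derive_unique, gg_deriv).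
    rewrite H.
    replace (-1/2 * (u*u*(1+v*v))) with (- (u ^ 2 * (1 + v ^ 2)) / 2) by field. ring. }
  apply continuity_2d_pt_mult.
  - apply continuity_2d_pt_mult. apply continuity_2d_pt_const. apply continuity_2d_pt_id1.
  - apply continuity_1d_2d_pt_comp with (f := exp) (g := fun u v => (-1/2) * ((u * u) * (1 + v * v))).
    + apply derivable_continuous_pt, derivable_pt_exp.
    + apply continuity_2d_pt_mult. apply continuity_2d_pt_const.
      apply continuity_2d_pt_mult. apply continuity_2d_pt_mult; apply continuity_2d_pt_id1.
      apply continuity_2d_pt_plus. apply continuity_2d_pt_const.
      apply continuity_2d_pt_mult; apply continuity_2d_pt_id2.
Qed.

Lemma gg_cont u t : continuous (gg u) t.
Proof.
  apply (@ex_derive_continuous R_AbsRing R_NormedModule). unfold gg. auto_derive.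
  assert (0 <= t^2) by (apply pow2_ge_0). lra.
Qed.

Lemma GG_deriv x : is_derive GG x (- ee x * FF x).
Proof.
  assert (H : is_derive GG x (RInt (fun t => Derive (fun u => gg u t) x) 0 1)).
  { apply (is_derive_RInt_param gg 0 1 x).
    - exists (mkposreal 1 Rlt_0_1). intros y _ t _. eexists. apply gg_deriv.
    - intros t _. apply gg_cont2.
    - exists (mkposreal 1 Rlt_0_1). intros y _. apply exR, gg_cont. }
  replace (- ee x * FF x) with (RInt (fun t => Derive (fun u => gg u t) x) 0 1); auto.
  rewrite (RInt_ext _ (fun t => (- ee x) * (x * ee (x * t + 0)))).
  2:{ intros t _.
      assert (H1 : Derive (fun u => gg u t) x = - x * exp (- (x ^ 2 * (1 + t ^ 2)) / 2)) by (apply is_derive_unique, gg_deriv).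
      rewrite H1. unfold ee.
      replace (- (x ^ 2 * (1 + t ^ 2)) / 2) with (- (x ^ 2) / 2 + - ((x * t + 0) ^ 2) / 2) by field.
      rewrite exp_plus. match goal with |- ?a = ?b => change (@eq R a b) end. ring. }
  assert (Hc : forall y, continuous (fun t => x * ee (x * t + 0)) y).
  { intros y. apply (@ex_derive_continuous R_AbsRing R_NormedModule). unfold ee. auto_derive. auto. }
  pose proof (RInt_scal (V:=R_CompleteNormedModule) (fun t => x * ee (x*t+0)) 0 1 (- ee x) (exR _ _ _ Hc)) as E1.
  pose proof (RInt_comp_lin (V:=R_CompleteNormedModule) ee x 0 0 1 (exR _ _ _ ee_cont)) as E2.
  unfold scal, mult in E1, E2; simpl in E1, E2. unfold mult in E1, E2; simpl in E1, E2.
  rewrite E1, E2. unfold FF.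
  rewrite Rmult_0_r, Rmult_1_r, !Rplus_0_r.
  reflexivity.
Qed.

Lemma hh_deriv (x : R) : is_derive hh x 0.
Proof.
  assert (D1 : is_derive (fun y => FF y * FF y) x (ee x * FF x + FF x * ee x)).
  { apply (is_derive_mult FF FF). apply FF_deriv. apply FF_deriv. intros; apply Rmult_comm. }
  assert (D2 : is_derive (fun y => 2 * GG y) x (2 * (- ee x * FF x))).
  { apply is_derive_scal. apply GG_deriv. }
  pose proof (is_derive_plus _ _ _ _ _ D1 D2) as D.
  replace 0 with (ee x * FF x + FF x * ee x + 2 * (- ee x * FF x)) by ring.
  exact D.
Qed.

Lemma hh_const (x : R) : hh x = hh 0.
Proof.
  assert (H := is_RInt_derive hh (fun _ => 0) 0 x (fun y _ => hh_deriv y) (fun y _ => continuous_const 0 y)).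
  apply is_RInt_unique in H. rewrite RInt_const in H.
  unfold scal, minus, plus, opp, zero, mult in H; simpl in H. unfold mult in H; simpl in H. lra.
Qed.

Lemma hh0 : hh 0 = PI / 2.
Proof.
  unfold hh, FF, GG. rewrite RInt_point. unfold zero; simpl.
  rewrite (RInt_ext _ (fun t => / (1 + t ^ 2))).
  2:{ intros t _. unfold gg. replace (- (0 ^ 2 * (1 + t ^ 2)) / 2) with 0 by field.
      rewrite exp_0. req. unfold Rdiv. ring. }
  assert (H : is_RInt (fun t => / (1 + t ^ 2)) 0 1 (minus (atan 1) (atan 0))).
  { apply (is_RInt_derive atan).
    - intros y _. apply is_derive_Reals, derivable_pt_lim_atan.
    - intros y _. apply (@ex_derive_continuous R_AbsRing R_NormedModule). auto_derive.
      assert (0 <= y^2) by (apply pow2_ge_0). lra. }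
  apply (@is_RInt_unique R_CompleteNormedModule) in H. rewrite H. unfold minus, plus, opp; simpl.
  rewrite atan_1, atan_0. field.
Qed.

Lemma FF_sq (x : R) : FF x * FF x = PI / 2 - 2 * GG x.
Proof. pose proof (hh_const x). rewrite hh0 in H. unfold hh in H. lra. Qed.

Lemma GG_bounds (x : R) : 0 <= GG x <= ee x.
Proof.
  unfold GG. split.
  - apply RInt_ge_0. lra. apply exR, gg_cont.
    intros t _. unfold gg. apply Rle_mult_inv_pos. apply Rlt_le, exp_pos.
    assert (0 <= t^2) by (apply pow2_ge_0). lra.
  - apply Rle_trans with (RInt (fun _ => ee x) 0 1).
    + apply RInt_le. lra. apply exR, gg_cont. apply exR. intros; apply continuous_const.
      intros t Ht. unfold gg, ee.
      assert (0 <= t^2) by (apply pow2_ge_0).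
      assert (0 <= x^2) by (apply pow2_ge_0).
      apply Rle_trans with (exp (- (x ^ 2 * (1 + t ^ 2)) / 2)).
      * unfold Rdiv. rewrite <- (Rmult_1_r (exp _)) at 2.
        apply Rmult_le_compat_l. apply Rlt_le, exp_pos.
        rewrite <- Rinv_1. apply Rinv_le_contravar; lra.
      * apply exp_le. assert (0 <= x^2 * t^2) by (apply Rmult_le_pos; auto). lra.
    + rewrite RInt_const. unfold scal, mult; simpl. unfold mult; simpl. lra.
Qed.

Lemma ee_pos x : 0 < ee x.
Proof. apply exp_pos. Qed.

Lemma RInt_sym (c : R) : RInt ee (-c) c = 2 * FF c.
Proof.
  unfold FF.
  rewrite <- (RInt_Chasles ee (-c) 0 c) by apply exR, ee_cont.
  assert (E : RInt ee (-c) 0 = RInt ee 0 c).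
  { rewrite <- (opp_RInt_swap ee) by apply exR, ee_cont.
    pose proof (RInt_comp_lin (V:=R_CompleteNormedModule) ee (-1) 0 0 c (exR _ _ _ ee_cont)) as E2.
    unfold scal, mult in E2; simpl in E2. unfold mult in E2; simpl in E2.
    replace (-1 * 0 + 0) with 0 in E2 by ring. replace (-1 * c + 0) with (-c) in E2 by ring.
    rewrite <- E2.
    rewrite (RInt_ext _ (fun y => -1 * (ee y))).
    2:{ intros y _. unfold ee. req. simpl.
        replace (- ((-1 * y + 0) * ((-1 * y + 0) * 1)) / 2) with (- (y * (y * 1)) / 2) by field. reflexivity. }
    pose proof (RInt_scal (V:=R_CompleteNormedModule) ee 0 c (-1) (exR _ _ _ ee_cont)) as E3.
    unfold scal, mult in E3; simpl in E3. unfold mult in E3; simpl in E3.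
    rewrite E3. unfold opp; simpl. ring. }
  rewrite E. unfold plus; simpl. ring.
Qed.

Lemma FF_ge0 c : 0 <= c -> 0 <= FF c.
Proof. intros Hc. unfold FF. apply RInt_ge_0; auto. apply exR, ee_cont. intros; apply Rlt_le, ee_pos. Qed.

Lemma sqrt2PI_sq : sqrt (2 * PI) * sqrt (2 * PI) = 2 * PI.
Proof. apply sqrt_sqrt. pose proof PI_RGT_0. lra. Qed.

Lemma GL1 a b : a <= b -> RInt ee a b <= sqrt (2 * PI).
Proof.
  intros Hab. set (c := Rabs a + Rabs b).
  assert (Ha : -c <= a) by (unfold c; pose proof (Rabs_pos b); pose proof (Rabs_pos a);
     destruct (Rabs_pos a); pose proof (Rle_abs (-a)); rewrite Rabs_Ropp in *; lra).
  assert (Hb : b <= c) by (unfold c; pose proof (Rabs_pos a); pose proof (Rle_abs b); lra).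
  apply Rle_trans with (RInt ee (-c) c).
  { apply RInt_mono_int; auto. apply ee_cont. intros; apply Rlt_le, ee_pos. }
  rewrite RInt_sym.
  assert (H0 : 0 <= FF c) by (apply FF_ge0; unfold c; pose proof (Rabs_pos a); pose proof (Rabs_pos b); lra).
  pose proof (FF_sq c). pose proof (GG_bounds c).
  rewrite <- (sqrt_square (2 * FF c)) by lra.
  apply sqrt_le_1_alt. nra.
Qed.

Lemma GL2 d : 0 < d -> exists A, 0 < A /\ (1 - d) * sqrt (2 * PI) < RInt ee (-A) A.
Proof.
  intros Hd. set (d' := Rmin d (1/2)).
  assert (Hd' : 0 < d' <= d /\ d' <= 1/2) by (unfold d'; split; [split|]; [apply Rmin_glb_lt|apply Rmin_l|apply Rmin_r]; lra).
  set (A := 4 / d' + 1).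
  assert (HA : 4 / d' < A) by (unfold A; lra).
  assert (H4 : 0 < 4 / d') by (apply Rdiv_lt_0_compat; lra).
  assert (Hee : ee A < d' / 2).
  { unfold ee. replace (- (A ^ 2) / 2) with (- (A ^ 2 / 2)) by field. rewrite exp_Ropp.
    pose proof (exp_ineq1_le (A ^ 2 / 2)).
    assert (A ^ 2 / 2 > 2 / d').
    { assert (HA1 : 1 < A) by (unfold A; lra). assert (A * A > A * 1) by (apply Rmult_lt_compat_l; [lra|exact HA1]). replace (2 / d') with ((4 / d') / 2) by (field; lra). simpl. nra. }
    assert (exp (A ^ 2 / 2) > 2 / d') by lra.
    replace (d' / 2) with (/ (2 / d')) by (field; lra).
    apply Rinv_lt_contravar; [|lra]. apply Rmult_lt_0_compat; lra. }
  exists A. split; [lra|].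
  rewrite RInt_sym.
  assert (H0 : 0 <= FF A) by (apply FF_ge0; lra).
  pose proof (FF_sq A). pose proof (GG_bounds A). pose proof sqrt2PI_sq. pose proof PI2_3_2.
  assert (HS : 0 < sqrt (2 * PI)) by (apply sqrt_lt_R0; lra).
  set (S := sqrt (2 * PI)) in *. set (y := 2 * FF A).
  assert (Hy2 : y * y >= S * S - 8 * ee A) by (unfold y; nra).
  assert (Hy0 : 0 <= y) by (unfold y; lra).
  destruct (Rle_lt_dec y ((1 - d) * S)) as [Hle|Hlt]; [|exact Hlt].
  exfalso.
  assert (Hd1 : d < 1).
  { destruct (Rlt_le_dec d 1) as [h|h]; [exact h|]. exfalso.
    assert (0 <= (d - 1) * S) by (apply Rmult_le_pos; lra).
    assert (Hy : y = 0) by lra. rewrite Hy in Hy2. lra. }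
  assert (y * y <= (1 - d) * S * ((1 - d) * S)) by nra.
  assert ((1-d)*(1-d) <= 1 - d) by nra.
  assert (d * (S * S) <= 8 * ee A) by nra.
  nra.
Qed.

Definition mp (y : R) := (y + Rabs y) / 2.

Lemma mp_pos y : 0 <= y -> mp y = y.
Proof. intros; unfold mp; rewrite Rabs_pos_eq; lra. Qed.
Lemma mp_neg y : y <= 0 -> mp y = 0.
Proof. intros; unfold mp; rewrite Rabs_left1; lra. Qed.
Lemma mp_ge0 y : 0 <= mp y.
Proof. destruct (Rle_dec 0 y). rewrite mp_pos; lra. rewrite mp_neg; lra. Qed.
Lemma mp_lip a b : Rabs (mp a - mp b) <= Rabs (a - b).
Proof.
  unfold mp. pose proof (Rabs_triang_inv a b). pose proof (Rabs_triang_inv b a).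
  rewrite (Rabs_minus_sym b a) in H0.
  apply Rabs_le.
  destruct (Rle_dec 0 (a - b)).
  - rewrite (Rabs_pos_eq (a - b)) in * by lra. split; lra.
  - rewrite (Rabs_left1 (a - b)) in * by lra. split; lra.
Qed.

Lemma abs_bounds a : - Rabs a <= a <= Rabs a.
Proof. pose proof (Rle_abs a). pose proof (Rle_abs (- a)). rewrite Rabs_Ropp in H0. lra. Qed.

Lemma lip_cont (f : R -> R) (L : R) : 0 <= L -> (forall x y, Rabs (f x - f y) <= L * Rabs (x - y)) -> forall x, continuous f x.
Proof.
  intros HL Hf x. apply continuity_pt_filterlim.
  intros eps Heps. exists (eps / (L + 1)). split.
  - apply Rdiv_lt_0_compat; lra.
  - intros y [_ Hy]. simpl in *. unfold R_dist in *.
    apply Rle_lt_trans with (L * Rabs (y - x)). apply Hf.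
    apply Rle_lt_trans with (L * (eps / (L + 1))).
    apply Rmult_le_compat_l; lra.
    apply Rlt_le_trans with ((L + 1) * (eps / (L + 1))).
    apply Rmult_lt_compat_r. apply Rdiv_lt_0_compat; lra. lra.
    right; field; lra.
Qed.

Lemma mp2_deriv y : is_derive (fun z => mp z ^ 2) y (2 * mp y).
Proof.
  destruct (Rtotal_order y 0) as [Hy|[Hy|Hy]].
  - rewrite (mp_neg y) by lra.
    apply is_derive_ext_loc with (fun _ => 0).
    + exists (mkposreal (- y) ltac:(lra)). intros z Hz. 
      change (Rabs (z - y) < - y) in Hz. apply Rabs_def2 in Hz.
      rewrite mp_neg by lra. simpl; ring.
    + replace (2 * 0) with (@zero R_NormedModule) by (unfold zero; simpl; ring). apply is_derive_const.
  - subst y. rewrite mp_neg by lra. apply is_derive_Reals.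
    intros eps Heps. exists (mkposreal eps Heps). intros h Hh0 Hh. simpl in Hh.
    rewrite Rplus_0_l, (mp_neg 0) by lra.
    destruct (Rle_dec 0 h).
    + rewrite mp_pos by lra. rewrite Rabs_pos_eq in Hh by lra.
      replace ((h ^ 2 - 0 ^ 2) / h - 2 * 0) with h by (field; auto).
      rewrite Rabs_pos_eq; lra.
    + rewrite mp_neg by lra. replace ((0 ^ 2 - 0 ^ 2) / h - 2 * 0) with 0 by (field; auto).
      rewrite Rabs_R0; lra.
  - rewrite (mp_pos y) by lra.
    apply is_derive_ext_loc with (fun z => z ^ 2).
    + exists (mkposreal y ltac:(lra)). intros z Hz. 
      change (Rabs (z - y) < y) in Hz. apply Rabs_def2 in Hz.
      rewrite mp_pos by lra. reflexivity.
    + auto_derive; auto. ring.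
Qed.

Definition fq (M x : R) := - (x ^ 2) / 2 + mp (x - M) ^ 2 - mp (x - 4 * M) ^ 2.
Definition sq (M x : R) := - x + 2 * mp (x - M) - 2 * mp (x - 4 * M).

Lemma shift_deriv c x : is_derive (fun x => mp (x - c) ^ 2) x (2 * mp (x - c)).
Proof.
  assert (D1 : is_derive (fun x : R => x - c) x 1) by (auto_derive; auto; ring).
  pose proof (is_derive_comp (fun z => mp z ^ 2) (fun x => x - c) x _ _ (mp2_deriv (x - c)) D1) as D.
  simpl in D. unfold scal in D; simpl in D. unfold mult in D; simpl in D.
  rewrite Rmult_1_l in D. exact D.
Qed.

Lemma fq_deriv M x : is_derive (fq M) x (sq M x).
Proof.
  assert (A1 : is_derive (fun x : R => - (x ^ 2) / 2) x (- x)) by (auto_derive; auto; field).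
  pose proof (is_derive_minus _ _ _ _ _ (is_derive_plus _ _ _ _ _ A1 (shift_deriv M x)) (shift_deriv (4 * M) x)) as D.
  replace (sq M x) with (minus (plus (- x) (2 * mp (x - M))) (2 * mp (x - 4 * M))).
  2:{ unfold sq, minus, plus, opp; simpl. ring. }
  eapply is_derive_ext; [|exact D].
  intros t. unfold fq, minus, plus, opp; simpl. ring.
Qed.

Lemma fq_cont M x : continuous (fq M) x.
Proof. apply (@ex_derive_continuous R_AbsRing R_NormedModule). eexists. apply fq_deriv. Qed.

Lemma sq_lip M x y : Rabs (sq M x - sq M y) <= 5 * Rabs (x - y).
Proof.
  unfold sq.
  pose proof (mp_lip (x - M) (y - M)). pose proof (mp_lip (x - 4 * M) (y - 4 * M)).
  replace (x - M - (y - M)) with (x - y) in H by ring.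
  replace (x - 4 * M - (y - 4 * M)) with (x - y) in H0 by ring.
  replace (- x + 2 * mp (x - M) - 2 * mp (x - 4 * M) - (- y + 2 * mp (y - M) - 2 * mp (y - 4 * M)))
    with (- (x - y) + 2 * (mp (x - M) - mp (y - M)) - 2 * (mp (x - 4 * M) - mp (y - 4 * M))) by ring.
  pose proof (abs_bounds (mp (x - M) - mp (y - M))).
  pose proof (abs_bounds (mp (x - 4 * M) - mp (y - 4 * M))).
  pose proof (abs_bounds (x - y)).
  apply Rabs_le. split; lra.
Qed.

Section Helpers.
Lemma cont_mul (f g : R -> R) x : continuous f x -> continuous g x -> continuous (fun y => f y * g y) x.
Proof. intros Hf Hg. exact (@continuous_mult R_UniformSpace R_AbsRing f g x Hf Hg). Qed.
Lemma cont_add (f g : R -> R) x : continuous f x -> continuous g x -> continuous (fun y => f y + g y) x.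
Proof. intros Hf Hg. exact (@continuous_plus R_UniformSpace R_AbsRing R_NormedModule f g x Hf Hg). Qed.
Lemma cont_sub (f g : R -> R) x : continuous f x -> continuous g x -> continuous (fun y => f y - g y) x.
Proof. intros Hf Hg. exact (@continuous_minus R_UniformSpace R_AbsRing R_NormedModule f g x Hf Hg). Qed.
Lemma cont_cst (c x : R) : continuous (fun _ : R => c) x.
Proof. apply continuous_const. Qed.
Lemma cont_abs (f : R -> R) x : continuous f x -> continuous (fun y => Rabs (f y)) x.
Proof. apply continuous_Rabs_comp. Qed.
Lemma cont_exp (f : R -> R) x : continuous f x -> continuous (fun y => exp (f y)) x.
Proof. apply continuous_exp_comp. Qed.

Lemma RInt_cmul (f : R -> R) c a b : (forall x, continuous f x) -> RInt (fun x => c * f x) a b = c * RInt f a b.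
Proof. intros Hf. exact (@RInt_scal R_CompleteNormedModule f a b c (exR _ _ _ Hf)). Qed.
Lemma RInt_add (f g : R -> R) a b : (forall x, continuous f x) -> (forall x, continuous g x) ->
  RInt (fun x => f x + g x) a b = RInt f a b + RInt g a b.
Proof. intros Hf Hg. exact (@RInt_plus R_CompleteNormedModule f g a b (exR _ _ _ Hf) (exR _ _ _ Hg)). Qed.
Lemma RInt_sub (f g : R -> R) a b : (forall x, continuous f x) -> (forall x, continuous g x) ->
  RInt (fun x => f x - g x) a b = RInt f a b - RInt g a b.
Proof. intros Hf Hg. exact (@RInt_minus R_CompleteNormedModule f g a b (exR _ _ _ Hf) (exR _ _ _ Hg)). Qed.
Lemma RInt_ch (f : R -> R) a b c : (forall x, continuous f x) -> RInt f a b + RInt f b c = RInt f a c.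
Proof. intros Hf. exact (@RInt_Chasles R_CompleteNormedModule f a b c (exR _ _ _ Hf) (exR _ _ _ Hf)). Qed.
Lemma RInt_cst (c a b : R) : RInt (fun _ => c) a b = c * (b - a).
Proof. rewrite RInt_const. unfold scal; simpl; unfold mult; simpl. ring. Qed.
Lemma RInt_le2 (f g : R -> R) a b : a <= b -> (forall x, continuous f x) -> (forall x, continuous g x) ->
  (forall x, a <= x <= b -> f x <= g x) -> RInt f a b <= RInt g a b.
Proof. intros Hab Hf Hg H. apply RInt_le; auto; try apply exR; auto. intros x [H1 H2]; apply H; lra. Qed.
End Helpers.

Lemma RInt_shift (f : R -> R) c a b : (forall x, continuous f x) -> RInt (fun y => f (y - c)) a b = RInt f (a - c) (b - c).
Proof.
  intros Hf.
  pose proof (RInt_comp_lin (V:=R_CompleteNormedModule) f 1 (-c) a b (exR _ _ _ Hf)) as E.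
  unfold scal, mult in E; simpl in E. unfold mult in E; simpl in E.
  replace (1 * a + - c) with (a - c) in E by ring. replace (1 * b + - c) with (b - c) in E by ring.
  rewrite <- E. apply RInt_ext. intros x _. req. rewrite !Rmult_1_l. reflexivity.
Qed.

Lemma fq_left M x : 0 <= M -> x <= M -> fq M x = - (x ^ 2) / 2.
Proof. intros. unfold fq. rewrite !mp_neg by lra. field. Qed.
Lemma fq_mid M x : 0 <= M -> M <= x <= 4 * M -> fq M x = (x - 2 * M) ^ 2 / 2 - M ^ 2.
Proof. intros. unfold fq. rewrite mp_pos by lra. rewrite mp_neg by lra. field. Qed.
Lemma fq_right M x : 0 <= M -> 4 * M <= x -> fq M x = 3 * M ^ 2 - (x - 6 * M) ^ 2 / 2.
Proof. intros. unfold fq. rewrite !mp_pos by lra. field. Qed.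

Lemma gq_cont M x : continuous (fun x => exp (fq M x)) x.
Proof. apply cont_exp, fq_cont. Qed.

Lemma ee_shift_cont c x : continuous (fun y => ee (y - c)) x.
Proof. apply (@ex_derive_continuous R_AbsRing R_NormedModule). unfold ee. auto_derive. auto. Qed.

Lemma g_bound M : 0 <= M -> forall a b, a <= b ->
  RInt (fun x => exp (fq M x)) a b <= sqrt (2 * PI) + exp (M ^ 2) * (3 * M) + exp (3 * M ^ 2) * sqrt (2 * PI).
Proof.
  intros HM a b Hab. set (f := fun x => exp (fq M x)).
  assert (fc : forall x, continuous f x) by (intros; apply gq_cont).
  set (a' := Rmin a M). set (b' := Rmax b (4 * M)).
  assert (Ha' : a' <= a /\ a' <= M) by (unfold a'; split; [apply Rmin_l|apply Rmin_r]).
  assert (Hb' : b <= b' /\ 4 * M <= b') by (unfold b'; split; [apply Rmax_l|apply Rmax_r]).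
  apply Rle_trans with (RInt f a' b').
  { apply RInt_mono_int; auto; try lra. intros; apply Rlt_le, exp_pos. }
  rewrite <- (RInt_ch f a' M b') by auto.
  rewrite <- (RInt_ch f M (4 * M) b') by auto.
  assert (P1 : RInt f a' M <= sqrt (2 * PI)).
  { rewrite (RInt_ext _ ee). apply GL1; lra.
    intros x Hx. rewrite Rmin_left in Hx by lra. rewrite Rmax_right in Hx by lra.
    unfold f, ee. req. rewrite fq_left by lra. reflexivity. }
  assert (P2 : RInt f M (4 * M) <= exp (M ^ 2) * (3 * M)).
  { apply Rle_trans with (RInt (fun _ => exp (M ^ 2)) M (4 * M)).
    - apply RInt_le2; auto; try lra. intros; apply cont_cst.
      intros x Hx. unfold f. rewrite fq_mid by lra. apply exp_le.
      assert ((x - 2 * M) ^ 2 <= 4 * M ^ 2) by nra. lra.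
    - rewrite RInt_cst. right; ring. }
  assert (P3 : RInt f (4 * M) b' <= exp (3 * M ^ 2) * sqrt (2 * PI)).
  { rewrite (RInt_ext _ (fun x => exp (3 * M ^ 2) * ee (x - 6 * M))).
    2:{ intros x Hx. rewrite Rmin_left in Hx by lra. rewrite Rmax_right in Hx by lra.
        unfold f, ee. req. rewrite fq_right by lra. rewrite <- exp_plus. f_equal. field. }
    rewrite RInt_cmul by apply ee_shift_cont.
    rewrite RInt_shift by apply ee_cont.
    apply Rmult_le_compat_l. apply Rlt_le, exp_pos. apply GL1. lra. }
  lra.
Qed.

Lemma Z_low M : 0 <= M -> forall Z, (forall a b, a <= b -> RInt (fun x => exp (fq M x)) a b <= Z) ->
  exp (3 * M ^ 2 - 1/2) <= Z.
Proof.
  intros HM Z HZ. apply Rle_trans with (RInt (fun x => exp (fq M x)) (6 * M) (6 * M + 1)); [|apply HZ; lra].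
  apply Rle_trans with (RInt (fun _ => exp (3 * M ^ 2 - 1/2)) (6 * M) (6 * M + 1)).
  - rewrite RInt_cst. right; ring.
  - apply RInt_le2; try lra. intros; apply cont_cst. intros; apply gq_cont.
    intros x Hx. rewrite fq_right by lra. apply exp_le.
    assert ((x - 6 * M) ^ 2 <= 1) by nra. lra.
Qed.

Lemma S_ge1 : 1 <= sqrt (2 * PI).
Proof. rewrite <- sqrt_1. apply sqrt_le_1_alt. pose proof PI2_3_2. lra. Qed.
Lemma S_le3 : sqrt (2 * PI) <= 3.
Proof. replace 3 with (sqrt (3 * 3)) by (rewrite sqrt_square; lra). apply sqrt_le_1_alt. pose proof PI_4. lra. Qed.

Lemma score_gauss x : score gauss x = - x.
Proof.
  unfold score.
  assert (HS : 0 < / sqrt (2 * PI)) by (apply Rinv_0_lt_compat; pose proof S_ge1; lra).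
  rewrite (Derive_ext _ (fun y => ln (/ sqrt (2 * PI)) + - (y ^ 2) / 2)).
  - apply is_derive_unique. auto_derive; auto. field.
  - intros t. unfold gauss. rewrite ln_mult, ln_exp; auto. apply exp_pos.
Qed.

Lemma ln_q_eq M Z t : 0 < Z -> ln (/ Z * exp (fq M t)) = ln (/ Z) + fq M t.
Proof. intros HZ. rewrite ln_mult, ln_exp; auto. apply Rinv_0_lt_compat; auto. apply exp_pos. Qed.

Lemma is_derive_lnq M Z x : 0 < Z -> is_derive (fun y => ln (/ Z * exp (fq M y))) x (sq M x).
Proof.
  intros HZ.
  pose proof (is_derive_plus _ _ _ _ _ (is_derive_const (ln (/ Z)) x) (fq_deriv M x)) as D.
  replace (sq M x) with (plus zero (sq M x)) by (unfold plus, zero; simpl; ring).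
  eapply is_derive_ext; [|exact D]. intros t. simpl. unfold plus; simpl. rewrite ln_q_eq; auto.
Qed.

Lemma score_q M Z x : 0 < Z -> score (fun x => / Z * exp (fq M x)) x = sq M x.
Proof. intros HZ. unfold score. apply is_derive_unique, is_derive_lnq; auto. Qed.

Lemma cont_pow2 (f : R -> R) x : continuous f x -> continuous (fun y => f y ^ 2) x.
Proof. intros Hf. eapply continuous_ext; [|apply (cont_mul f f x Hf Hf)]. intros; simpl; ring. Qed.

Lemma gauss_cont x : continuous gauss x.
Proof. apply (@ex_derive_continuous R_AbsRing R_NormedModule). unfold gauss. auto_derive. auto. Qed.

Definition hdiv M x := gauss x * (- x - sq M x) ^ 2.

Lemma hdiv_cont M x : continuous (hdiv M) x.
Proof.
  unfold hdiv. apply cont_mul. apply gauss_cont. apply cont_pow2.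
  apply (lip_cont _ 6). lra. intros u v.
  pose proof (sq_lip M u v).
  replace (- u - sq M u - (- v - sq M v)) with (- (u - v) - (sq M u - sq M v)) by ring.
  eapply Rle_trans. apply Rabs_triang. rewrite Rabs_Ropp, Rabs_Ropp. lra.
Qed.

Lemma hdiv_ge0 M x : 0 <= hdiv M x.
Proof. unfold hdiv. apply Rmult_le_pos. unfold gauss. apply Rmult_le_pos. apply Rlt_le, Rinv_0_lt_compat. pose proof S_ge1; lra. apply Rlt_le, exp_pos. apply pow2_ge_0. Qed.

Lemma hdiv_bound M : 1 <= M -> forall a b, a <= b -> RInt (hdiv M) a b <= 4 * (M ^ 2 + 2) * ee M.
Proof.
  intros HM a b Hab.
  set (a' := Rmin a M). set (b' := Rmax b M).
  assert (Ha' : a' <= a /\ a' <= M) by (unfold a'; split; [apply Rmin_l|apply Rmin_r]).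
  assert (Hb' : b <= b' /\ M <= b') by (unfold b'; split; [apply Rmax_l|apply Rmax_r]).
  apply Rle_trans with (RInt (hdiv M) a' b').
  { apply RInt_mono_int; auto; try lra. apply hdiv_cont. apply hdiv_ge0. }
  rewrite <- (RInt_ch (hdiv M) a' M b') by apply hdiv_cont.
  assert (P1 : RInt (hdiv M) a' M <= 0).
  { apply Rle_trans with (RInt (fun _ => 0) a' M).
    - apply RInt_le2; try lra. apply hdiv_cont. intros; apply cont_cst.
      intros x Hx. unfold hdiv, sq. rewrite !mp_neg by lra. right. ring.
    - rewrite RInt_cst. right; ring. }
  set (H := fun x => - 4 * (x ^ 2 + 2) * ee x).
  assert (HI : is_RInt (fun x => 4 * (x ^ 3 * ee x)) M b' (minus (H b') (H M))).
  { apply (is_RInt_derive H).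
    - intros x _. unfold H, ee. auto_derive; auto. replace (- (x * (x * 1)) * / 2) with (- (x ^ 2) / 2) by field. req. field.
    - intros x _. apply (@ex_derive_continuous R_AbsRing R_NormedModule). unfold ee. auto_derive. auto. }
  apply (@is_RInt_unique R_CompleteNormedModule) in HI.
  assert (P2 : RInt (hdiv M) M b' <= 4 * (M ^ 2 + 2) * ee M).
  { apply Rle_trans with (RInt (fun x => 4 * (x ^ 3 * ee x)) M b').
    - apply RInt_le2; try lra. apply hdiv_cont.
      intros; apply (@ex_derive_continuous R_AbsRing R_NormedModule). unfold ee. auto_derive. auto.
      intros x Hx. unfold hdiv.
      assert (Hw : (- x - sq M x) ^ 2 <= 4 * x ^ 3).
      { unfold sq. rewrite (mp_pos (x - M)) by lra.
        assert (0 <= mp (x - 4 * M) <= x - M).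
        { split. apply mp_ge0. destruct (Rle_dec (x - 4 * M) 0). rewrite mp_neg; lra. rewrite mp_pos; lra. }
        replace (- x - (- x + 2 * (x - M) - 2 * mp (x - 4 * M))) with (- 2 * ((x - M) - mp (x - 4 * M))) by ring.
        assert (0 <= (x - M) - mp (x - 4 * M) <= x) by lra.
        assert (x ^ 2 <= x ^ 3) by (simpl; nra).
        assert (((x - M) - mp (x - 4 * M)) ^ 2 <= x ^ 2) by (simpl; nra).
        replace ((-2 * (x - M - mp (x - 4 * M))) ^ 2) with (4 * (x - M - mp (x - 4 * M)) ^ 2) by ring.
        lra. }
      assert (Hg : gauss x <= ee x).
      { unfold gauss, ee. pose proof S_ge1. pose proof (exp_pos (- (x ^ 2) / 2)).
        rewrite <- (Rmult_1_l (exp _)) at 2. apply Rmult_le_compat_r. lra.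
        rewrite <- Rinv_1. apply Rinv_le_contravar; lra. }
      pose proof (ee_pos x). pose proof (pow2_ge_0 (- x - sq M x)).
      replace (4 * (x ^ 3 * ee x)) with (ee x * (4 * x ^ 3)) by ring.
      assert (0 <= gauss x).
      { unfold gauss. apply Rmult_le_pos. apply Rlt_le, Rinv_0_lt_compat. pose proof S_ge1; lra. apply Rlt_le, exp_pos. }
      apply Rmult_le_compat; lra.
    - rewrite HI. unfold minus, plus, opp; simpl. unfold H.
      pose proof (ee_pos b'). pose proof (pow2_ge_0 b').
      assert (0 <= 4 * (b' ^ 2 + 2) * ee b') by (apply Rmult_le_pos; [lra|lra]). lra. }
  lra.
Qed.

Lemma num_bound M : 1 <= M -> 4 * (M ^ 2 + 2) * ee M <= 64 / M.
Proof.
  intros HM. unfold ee.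
  replace (- (M ^ 2) / 2) with (- (M ^ 2 / 2)) by field. rewrite exp_Ropp.
  assert (HE : exp (M ^ 2 / 2) = exp (M ^ 2 / 4) * exp (M ^ 2 / 4)) by (rewrite <- exp_plus; f_equal; field).
  pose proof (exp_ineq1_le (M ^ 2 / 4)).
  assert (HE2 : (1 + M ^ 2 / 4) * (1 + M ^ 2 / 4) <= exp (M ^ 2 / 2)).
  { rewrite HE. assert (0 <= 1 + M^2/4) by (pose proof (pow2_ge_0 M); lra). apply Rmult_le_compat; lra. }
  assert (Hpos : 0 < exp (M ^ 2 / 2)) by apply exp_pos.
  apply (Rmult_le_reg_r (M * exp (M ^ 2 / 2))). apply Rmult_lt_0_compat; lra.
  replace (4 * (M ^ 2 + 2) * / exp (M ^ 2 / 2) * (M * exp (M ^ 2 / 2))) with (4 * (M ^ 2 + 2) * M) by (field; lra).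
  replace (64 / M * (M * exp (M ^ 2 / 2))) with (64 * exp (M ^ 2 / 2)) by (field; lra).
  simpl in *. nra.
Qed.

Lemma le_of_approx (l b : R) : (forall d, 0 < d -> l - d < b) -> l <= b.
Proof.
  intros H. destruct (Rle_lt_dec l b) as [h|h]; auto.
  specialize (H (l - b) ltac:(lra)). lra.
Qed.

Theorem theorem12 :
  exists C : R, forall eps : R, 0 < eps ->
    exists q : R -> R,
      is_prob_density q /\
      log_smooth C q /\
      (exists d, score_div_is gauss q d /\ d < eps) /\
      (exists t, tv_is gauss q t /\ t > 1 - eps).
Proof.
  exists 5. intros eps Heps.
  pose proof S_ge1 as HS1. pose proof S_le3 as HS3.
  set (S := sqrt (2 * PI)) in *.
  set (d := eps / 4).
  destruct (GL2 d) as [A [HA HAint]]; [unfold d; lra|].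
  fold S in HAint.
  assert (Hepsinv : 0 < 400 / eps) by (apply Rdiv_lt_0_compat; lra).
  set (M := A + 1 + 400 / eps).
  assert (HM1 : 1 <= M) by (unfold M; lra).
  assert (HMA : A <= M) by (unfold M; lra).
  assert (HMe : 400 / eps <= M) by (unfold M; lra).
  set (g := fun x => exp (fq M x)).
  assert (gc : forall x, continuous g x) by (intros; apply gq_cont).
  assert (gpos : forall x, 0 < g x) by (intros; apply exp_pos).
  destruct (mono_int g _ gc (fun x => Rlt_le _ _ (gpos x)) (g_bound M ltac:(lra))) as [Z [HZ [HZup HZapp]]].
  assert (HZlow : exp (3 * M ^ 2 - 1/2) <= Z) by (apply Z_low; [lra|exact HZup]).
  assert (HZpos : 0 < Z) by (pose proof (exp_pos (3 * M ^ 2 - 1/2)); lra).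
  set (q := fun x => / Z * g x).
  exists q.
  assert (HiZ : 0 < / Z) by (apply Rinv_0_lt_compat; lra).
  assert (qpos : forall x, 0 < q x) by (intros; unfold q; apply Rmult_lt_0_compat; auto).
  assert (qc : forall x, continuous q x) by (intros; unfold q; apply cont_mul; [apply cont_cst | apply gc]).
  assert (Rq : forall a b, RInt q a b = / Z * RInt g a b) by (intros; exact (RInt_cmul g (/ Z) a b gc)).
  assert (Rg : forall a b, RInt gauss a b = / S * RInt ee a b) by (intros; exact (RInt_cmul ee (/ S) a b ee_cont)).
  assert (HSpos : 0 < / S) by (apply Rinv_0_lt_compat; lra).
  assert (Hsq : forall x, score q x = sq M x) by (intros; apply score_q; auto).
  split; [|split; [|split]].
  -
    split. intros; apply Rlt_le, qpos.
    pose proof (@is_RInt_gen_scal R_NormedModule (Rbar_locally m_infty) (Rbar_locally p_infty) _ _ g (/ Z) Z HZ) as H1.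
    unfold is_RInt_R. replace 1 with (scal (/ Z) Z). exact H1.
    unfold scal; simpl; unfold mult; simpl. field; lra.
  -
    split; [exact qpos|split].
    + intros x. eexists. apply (is_derive_lnq M Z x HZpos).
    + intros x y. rewrite !Hsq. apply sq_lip.
  -
    destruct (mono_int (hdiv M) (4 * (M ^ 2 + 2) * ee M) (hdiv_cont M) (hdiv_ge0 M) (hdiv_bound M HM1)) as [dv [Hdv [Hdvup Hdvapp]]].
    exists dv. split.
    + unfold score_div_is.
      replace (fun x => gauss x * (score gauss x - score q x) ^ 2) with (hdiv M). exact Hdv.
      apply functional_extensionality; intros x; unfold hdiv; rewrite score_gauss, Hsq; reflexivity.
    + assert (dv <= 4 * (M ^ 2 + 2) * ee M).
      { apply le_of_approx. intros d0 Hd0. destruct (Hdvapp d0 Hd0) as [a1 [b1 [Hab1 H1]]].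
        pose proof (hdiv_bound M HM1 a1 b1 Hab1). lra. }
      pose proof (num_bound M HM1).
      assert (64 / M <= 64 * (eps / 400)).
      { unfold Rdiv. apply Rmult_le_compat_l; [lra|].
        replace (eps * / 400) with (/ (400 / eps)) by (field; lra).
        apply Rinv_le_contravar; lra. }
      lra.
  -
    set (k := fun x => Rabs (gauss x - q x)).
    assert (kc : forall x, continuous k x) by (intros; apply cont_abs, cont_sub; [apply gauss_cont|apply qc]).
    assert (Rg1 : forall a b, a <= b -> RInt gauss a b <= 1).
    { intros a b Hab. rewrite Rg. pose proof (GL1 a b Hab). fold S in H.
      replace 1 with (/ S * S) by (field; lra). apply Rmult_le_compat_l; lra. }
    assert (Rq1 : forall a b, a <= b -> RInt q a b <= 1).
    { intros a b Hab. rewrite Rq. pose proof (HZup a b Hab).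
      replace 1 with (/ Z * Z) by (field; lra). apply Rmult_le_compat_l; lra. }
    assert (gaussc : forall x, continuous gauss x) by apply gauss_cont.
    assert (gauss_pos : forall x, 0 <= gauss x).
    { intros x. unfold gauss. fold S. apply Rmult_le_pos; [lra|]. apply Rlt_le, exp_pos. }
    assert (kb : forall a b, a <= b -> RInt k a b <= 2).
    { intros a b Hab.
      apply Rle_trans with (RInt (fun x => gauss x + q x) a b).
      - apply RInt_le2; auto. intros; apply cont_add; auto.
        intros x _. unfold k. pose proof (gauss_pos x). pose proof (qpos x).
        apply Rabs_le. split; lra.
      - rewrite RInt_add by auto. pose proof (Rg1 a b Hab). pose proof (Rq1 a b Hab). lra. }
    assert (k0 : forall x, 0 <= k x) by (intros; apply Rabs_pos).
    destruct (mono_int k 2 kc k0 kb) as [v [Hv [Hvup Hvapp]]].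
    exists (v / 2). split.
    { exists v. split; [exact Hv | reflexivity]. }
    destruct (HZapp (d * Z)) as [a0 [b0 [Hab0 Happ0]]].
    { apply Rmult_lt_0_compat; unfold d; lra. }
    set (a := Rmin a0 (- A)). set (B := Rmax b0 M).
    assert (Ha : a <= a0 /\ a <= - A) by (unfold a; split; [apply Rmin_l|apply Rmin_r]).
    assert (HB : b0 <= B /\ M <= B) by (unfold B; split; [apply Rmax_l|apply Rmax_r]).
    assert (V1 : RInt k a B <= v) by (apply Hvup; lra).
    rewrite <- (RInt_ch k a M B kc) in V1.
    assert (L1 : RInt gauss a M - RInt q a M <= RInt k a M).
    { rewrite <- RInt_sub by auto. apply RInt_le2; try lra; auto.
      intros; apply cont_sub; auto. intros x _. unfold k. apply Rle_abs. }
    assert (L2 : RInt q M B - RInt gauss M B <= RInt k M B).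
    { rewrite <- RInt_sub by auto. apply RInt_le2; try lra; auto.
      intros; apply cont_sub; auto. intros x _. unfold k. rewrite Rabs_minus_sym. apply Rle_abs. }
    assert (G1' : 1 - d < RInt gauss a M).
    { apply Rlt_le_trans with (RInt gauss (- A) A).
      - rewrite Rg. replace (1 - d) with (/ S * ((1 - d) * S)) by (field; lra).
        apply Rmult_lt_compat_l; auto.
      - apply RInt_mono_int; auto; lra. }
    assert (Hga : RInt g a M = RInt ee a M).
    { apply RInt_ext. intros x Hx. rewrite Rmin_left in Hx by lra. rewrite Rmax_right in Hx by lra.
      unfold g, ee. req. rewrite fq_left by lra. reflexivity. }
    assert (Q1 : RInt q a M <= / Z * S).
    { rewrite Rq, Hga. apply Rmult_le_compat_l; [lra|]. apply GL1; lra. }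
    assert (Q2 : 1 - d - / Z * S <= RInt q M B).
    { rewrite Rq. pose proof (RInt_ch g a M B gc) as Hch.
      assert (RInt g a0 b0 <= RInt g a B) by (apply RInt_mono_int; auto; try lra; intros; apply Rlt_le, gpos).
      assert (RInt g a M <= S) by (rewrite Hga; apply GL1; lra).
      replace (1 - d - / Z * S) with (/ Z * (Z - d * Z - S)) by (field; lra).
      apply Rmult_le_compat_l; lra. }
    assert (G2' : RInt gauss M B <= d).
    { pose proof (Rg1 a B ltac:(lra)). rewrite <- (RInt_ch gauss a M B gaussc) in H. lra. }
    assert (HZbig : 1200 / eps <= Z).
    { apply Rle_trans with (exp (3 * M ^ 2 - 1 / 2)); auto.
      pose proof (exp_ineq1_le (3 * M ^ 2 - 1 / 2)).
      assert (M <= M ^ 2) by (simpl; nra).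
      assert (1200 / eps = 3 * (400 / eps)) by (field; lra). lra. }
    assert (HiZS : / Z * S <= 3 * (eps / 1200)).
    { rewrite (Rmult_comm (/ Z) S). apply Rmult_le_compat; try lra.
      replace (eps / 1200) with (/ (1200 / eps)) by (field; lra).
      apply Rinv_le_contravar; auto. apply Rdiv_lt_0_compat; lra. }
    unfold d in *. lra.
Qed.
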